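(* Let $\phi\in\,]0,\pi[$, $M\in\mathbb{R}$, $N>0$, let $\Sigma$ be the Keplerian branch around ${\rm O}$ in the plane ${\rm O}xy$ with equation $r=My+N$, and let $g$ be the affine map $(x_1,y_1)\mapsto(x_3,y_3)$ defined by $x_1=x_3-M\frac{\cos\phi}{\sin\phi}y_3-N\cos\phi$, $y_1=\frac{1}{\sin\phi}y_3$. Let $\Gamma$ be a Keplerian arc carried by $\Sigma$ whose endpoints ${\rm A}$ and ${\rm B}$ have the same ordinate $y_{\rm A}=y_{\rm B}$. Then the elapsed time $\Delta t=t_{\rm B}-t_{\rm A}$ of the image arc $g(\Gamma)$ equals that of $\Gamma$.
   Context: In the Euclidean plane ${\rm O}xy$, $r=\sqrt{x^2+y^2}$, Newton's system $\ddot q=-q/r^3$, energy $H=\frac12\|\dot q\|^2-\frac1r$. A Keplerian arc is the class, modulo time shifts, of a solution (extended through collisions by bouncing back along the same ray with the same energy) restricted to $[t_{\rm A},t_{\rm B}]$, $t_{\rm B}>t_{\rm A}$, with ends ${\rm A}=q(t_{\rm A})$, ${\rm B}=q(t_{\rm B})$ and elapsed time $\Delta t=t_{\rm B}-t_{\rm A}$. The image $g(\Sigma)$ is the Keplerian branch $r=x\cos\phi+yM\sin\phi+N\sin^2\phi$. The image arc $g(\Gamma)$ is the Keplerian arc on $g(\Sigma)$ obtained by mapping $\Gamma$ as an unparametrized oriented curve (including its number of turns around ${\rm O}$), traversed in the direction induced by $g$ from $g({\rm A})$ to $g({\rm B})$, with time parametrization given by Newton's system. *)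

(* Defs.v *)
From Stdlib Require Import Reals Lra.
Open Scope R_scope.

Definition rad (x y : R) : R := sqrt (x ^ 2 + y ^ 2).

Definition cont_on (a b : R) (f : R -> R) : Prop :=
  forall t, a <= t <= b -> forall eps, 0 < eps ->
    exists delta, 0 < delta /\
      forall u, a <= u <= b -> Rabs (u - t) < delta -> Rabs (f u - f t) < eps.

Definition newton_sol (x y : R -> R) (a b : R) : Prop :=
  cont_on a b x /\ cont_on a b y /\
  exists vx vy : R -> R,
    forall t, a < t < b ->
      derivable_pt_lim x t (vx t) /\ derivable_pt_lim y t (vy t) /\
      derivable_pt_lim vx t (- x t / (rad (x t) (y t)) ^ 3) /\
      derivable_pt_lim vy t (- y t / (rad (x t) (y t)) ^ 3).

Definition on_sigma (M N x y : R) : Prop := rad x y = M * y + N.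

Definition g_rel (phi M N x1 y1 x3 y3 : R) : Prop :=
  x1 = x3 - M * (cos phi / sin phi) * y3 - N * cos phi /\
  y1 = y3 / sin phi.

(* (x3,y3) on [sA,sB] is the image arc g(Gamma) of the arc (x,y) on [tA,tB]:
   a Newton solution whose oriented unparametrized curve is g o Gamma,
   i.e. it equals g o Gamma o h for an increasing continuous reparametrization
   h of [sA,sB] onto [tA,tB]. *)
Definition image_arc (phi M N : R) (x y : R -> R) (tA tB : R)
    (x3 y3 : R -> R) (sA sB : R) : Prop :=
  sA < sB /\ newton_sol x3 y3 sA sB /\
  exists h : R -> R,
    h sA = tA /\ h sB = tB /\ cont_on sA sB h /\
    (forall s1 s2, sA <= s1 -> s1 < s2 -> s2 <= sB -> h s1 < h s2) /\
    (forall s, sA <= s <= sB ->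
       g_rel phi M N (x (h s)) (y (h s)) (x3 s) (y3 s)).

(* Main.v *)
Require Import Defs.
From Stdlib Require Import Reals.
From Stdlib Require Import Lra Psatz ClassicalEpsilon.
From Coquelicot Require Import Coquelicot.
Open Scope R_scope.


Lemma deriv_local f g t l a b : a < t < b -> (forall u, a < u < b -> g u = f u) ->
  derivable_pt_lim f t l -> derivable_pt_lim g t l.
Proof.
  intros Ht Heq Hf eps Heps. destruct (Hf eps Heps) as [d Hd].
  assert (Hp : 0 < Rmin d (Rmin (t - a) (b - t))).
  { destruct d as [d dp]; simpl. apply Rmin_pos; [lra| apply Rmin_pos; lra]. }
  exists (mkposreal _ Hp). intros h hn hd. simpl in hd.
  assert (H1 := Rmin_l d (Rmin (t - a) (b - t))).
  assert (H2 := Rmin_r d (Rmin (t - a) (b - t))).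
  assert (H3 := Rmin_l (t - a) (b - t)).
  assert (H4 := Rmin_r (t - a) (b - t)).
  assert (Hh: -Rabs h <= h <= Rabs h) by (split; [apply Rabs_maxi|apply Rle_abs] || (unfold Rabs; destruct Rcase_abs; lra)).
  rewrite (Heq (t+h)) by (unfold Rabs in *; destruct Rcase_abs; lra).
  rewrite (Heq t) by lra. apply Hd; auto. lra.
Qed.

Definition clamp a b u := Rmax a (Rmin b u).

Lemma clamp_lip a b u v : Rabs (clamp a b u - clamp a b v) <= Rabs (u - v).
Proof. unfold clamp, Rmax, Rmin; repeat destruct Rle_dec; unfold Rabs; repeat destruct Rcase_abs; lra. Qed.

Lemma clamp_in a b u : a <= b -> a <= clamp a b u <= b.
Proof. intros; unfold clamp, Rmax, Rmin; repeat destruct Rle_dec; lra. Qed.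

Lemma clamp_id a b u : a <= u <= b -> clamp a b u = u.
Proof. intros; unfold clamp, Rmax, Rmin; repeat destruct Rle_dec; lra. Qed.

Lemma cont_clamp a b f : a <= b -> cont_on a b f ->
  forall t, continuity_pt (fun u => f (clamp a b u)) t.
Proof.
  intros Hab Hc t. unfold continuity_pt, continue_in, limit1_in, limit_in; simpl; unfold R_dist.
  intros eps Heps.
  destruct (Hc (clamp a b t) (clamp_in a b t Hab) eps Heps) as [d [Hd Hdd]].
  exists d; split; auto. intros u [_ Hu].
  apply Hdd. apply clamp_in; auto.
  eapply Rle_lt_trans; [apply clamp_lip| auto].
Qed.

Lemma MVT_on f df a b : a < b -> cont_on a b f ->
  (forall t, a < t < b -> derivable_pt_lim f t (df t)) ->
  forall t1 t2, a <= t1 < t2 -> t2 <= b ->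
  exists xi, t1 < xi < t2 /\ f t2 - f t1 = df xi * (t2 - t1).
Proof.
  intros Hab Hc Hd t1 t2 H1 H2.
  set (g := fun u => f (clamp a b u)).
  assert (Dg : forall c, t1 < c < t2 -> derivable_pt_lim g c (df c)).
  { intros c Hc'. apply (deriv_local f g c (df c) a b); [lra| |apply Hd; lra].
    intros u Hu; unfold g; rewrite clamp_id; auto; lra. }
  assert (pr1 : forall c, t1 < c < t2 -> derivable_pt g c).
  { intros c Hc'. exact (exist _ (df c) (Dg c Hc')). }
  assert (pr2 : forall c, t1 < c < t2 -> derivable_pt id c).
  { intros c _. apply derivable_pt_id. }
  destruct (MVT g id t1 t2 pr1 pr2) as [c [P Hm]]; [lra| | |]; [ | | ].
  - intros; unfold g; apply cont_clamp; [lra|auto].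
  - intros; apply derivable_continuous_pt, derivable_pt_id.
  - exists c; split; auto.
    rewrite (derive_pt_eq_0 _ _ _ (pr1 c P) (Dg c P)) in Hm.
    rewrite (derive_pt_eq_0 _ _ _ (pr2 c P) (derivable_pt_lim_id c)) in Hm.
    unfold g, id in Hm. rewrite !clamp_id in Hm by lra. lra.
Qed.

Lemma const_on f a b : a < b -> cont_on a b f ->
  (forall t, a < t < b -> derivable_pt_lim f t 0) -> f b = f a.
Proof.
  intros Hab Hc Hd. destruct (MVT_on f (fun _ => 0) a b Hab Hc Hd a b) as [xi [_ H]]; lra.
Qed.


Lemma quot_ineq Q Phi G L eta eps : L <> 0 -> 0 < eps ->
  Rabs (Phi - L) < eta -> Rabs (Q - G) < eta ->
  eta <= Rabs L / 2 -> eta <= eps * (Rabs L * Rabs L) / (4 * (Rabs L + Rabs G)) ->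
  Rabs (Q / Phi - G / L) < eps.
Proof.
  intros HL He H1 H2 H3 H4.
  assert (HaL : 0 < Rabs L) by (apply Rabs_pos_lt; auto).
  assert (HPhi : Rabs L / 2 < Rabs Phi).
  { assert (Rabs L <= Rabs (Phi - L) + Rabs Phi).
    { replace L with (Phi - (Phi - L)) at 1 by ring. 
      eapply Rle_trans; [apply Rabs_triang|]. rewrite Rabs_Ropp. lra. }
    lra. }
  assert (HP0 : Phi <> 0) by (intro E; rewrite E, Rabs_R0 in HPhi; lra).
  replace (Q / Phi - G / L) with (((Q - G) * L - G * (Phi - L)) / (Phi * L)) by (field; auto).
  unfold Rdiv. rewrite Rabs_mult, Rabs_Rinv, Rabs_mult by (apply Rmult_integral_contrapositive; auto).
  assert (Hn : Rabs ((Q - G) * L - G * (Phi - L)) <= eta * Rabs L + Rabs G * eta).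
  { eapply Rle_trans; [apply Rabs_triang|]. rewrite Rabs_Ropp, !Rabs_mult.
    assert (0 <= Rabs G) by apply Rabs_pos.
    apply Rplus_le_compat; [apply Rmult_le_compat_r; lra| apply Rmult_le_compat_l; lra]. }
  assert (HG : 0 <= Rabs G) by apply Rabs_pos.
  assert (Hd : Rabs L * Rabs L / 2 < Rabs Phi * Rabs L) by nra.
  apply (Rmult_lt_reg_r (Rabs Phi * Rabs L)); [nra|].
  rewrite Rmult_assoc, Rinv_l by nra. rewrite Rmult_1_r.
  assert (eta * (4 * (Rabs L + Rabs G)) <= eps * (Rabs L * Rabs L)).
  { apply (Rmult_le_compat_r (4 * (Rabs L + Rabs G))) in H4; [|lra].
    unfold Rdiv in H4. rewrite Rmult_assoc, Rinv_l, Rmult_1_r in H4 by lra. exact H4. }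
  nra.
Qed.

Lemma ratio_deriv (f k F : R -> R) a b s0 L G :
  a < s0 < b -> derivable_pt_lim f (k s0) L -> L <> 0 ->
  (forall eps, 0 < eps -> exists d, 0 < d /\
      forall s, a < s < b -> Rabs (s - s0) < d -> Rabs (k s - k s0) < eps) ->
  (forall s, a < s < b -> s <> s0 -> k s <> k s0) ->
  (forall s, a < s < b -> f (k s) = F s) ->
  derivable_pt_lim F s0 G ->
  derivable_pt_lim k s0 (G / L).
Proof.
  intros Hs Hf HL Hk Hinj Heq HF eps Heps.
  assert (HaL : 0 < Rabs L) by (apply Rabs_pos_lt; auto).
  assert (HG : 0 <= Rabs G) by apply Rabs_pos.
  set (eta := Rmin (Rabs L / 2) (eps * (Rabs L * Rabs L) / (4 * (Rabs L + Rabs G)))).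
  assert (Heta : 0 < eta).
  { unfold eta; apply Rmin_pos; [lra|]. apply Rdiv_lt_0_compat; [|lra].
    apply Rmult_lt_0_compat; nra. }
  destruct (Hf eta Heta) as [d1 Hd1].
  destruct (Hk d1 (cond_pos d1)) as [d2 [Hd2 Hdd2]].
  destruct (HF eta Heta) as [d3 Hd3].
  assert (Hp : 0 < Rmin (Rmin d2 d3) (Rmin (s0 - a) (b - s0))).
  { destruct d3 as [d3 p3]; simpl. repeat apply Rmin_pos; lra. }
  exists (mkposreal _ Hp). intros h hn hd; simpl in hd.
  assert (A1 := Rmin_l (Rmin d2 d3) (Rmin (s0 - a) (b - s0))).
  assert (A2 := Rmin_r (Rmin d2 d3) (Rmin (s0 - a) (b - s0))).
  assert (A3 := Rmin_l d2 d3). assert (A4 := Rmin_r d2 d3).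
  assert (A5 := Rmin_l (s0 - a) (b - s0)). assert (A6 := Rmin_r (s0 - a) (b - s0)).
  assert (Hin : a < s0 + h < b) by (unfold Rabs in hd; destruct Rcase_abs in hd; lra).
  set (m := k (s0 + h) - k s0).
  assert (Hm0 : m <> 0).
  { unfold m; intro E. apply (Hinj (s0 + h)); auto. intro E2; apply hn; lra. lra. }
  assert (Hm1 : Rabs m < d1).
  { unfold m; apply Hdd2; auto. replace (s0 + h - s0) with h by ring. lra. }
  specialize (Hd1 m Hm0 Hm1). specialize (Hd3 h hn ltac:(lra)).
  replace (k s0 + m) with (k (s0 + h)) in Hd1 by (unfold m; ring).
  rewrite (Heq (s0 + h)), (Heq s0) in Hd1 by lra.
  set (Phi := (F (s0 + h) - F s0) / m) in *.
  set (Q := (F (s0 + h) - F s0) / h) in *.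
  assert (E : m / h = Q / Phi).
  { unfold Q, Phi.
    assert (F (s0 + h) - F s0 <> 0).
    { intro Z. unfold Phi in Hd1. rewrite Z in Hd1. unfold Rdiv in Hd1.
      rewrite Rmult_0_l, Rminus_0_l, Rabs_Ropp in Hd1.
      assert (eta <= Rabs L / 2) by apply Rmin_l. lra. }
    field; auto. }
  rewrite E. apply (quot_ineq Q Phi G L eta eps); auto; [apply Rmin_l | apply Rmin_r].
Qed.

Lemma inc_deriv_nonneg k a b s0 l : a < s0 < b ->
  (forall s1 s2, a < s1 -> s1 < s2 -> s2 < b -> k s1 < k s2) ->
  derivable_pt_lim k s0 l -> 0 <= l.
Proof.
  intros Hs Hinc Hd. destruct (Rle_or_lt 0 l) as [|Hl]; auto.
  destruct (Hd (- l) ltac:(lra)) as [d Hdd].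
  set (h := Rmin (d / 2) ((b - s0) / 2)).
  assert (Hh : 0 < h) by (unfold h; destruct d as [d dp]; simpl; apply Rmin_pos; lra).
  assert (Hh1 : h <= d / 2) by apply Rmin_l. assert (Hh2 : h <= (b - s0) / 2) by apply Rmin_r.
  destruct d as [d dp]; simpl in *.
  specialize (Hdd h ltac:(lra) ltac:(rewrite Rabs_pos_eq; lra)).
  assert (k s0 < k (s0 + h)) by (apply Hinc; lra).
  assert (0 < (k (s0 + h) - k s0) / h) by (apply Rdiv_lt_0_compat; lra).
  unfold Rabs in Hdd; destruct Rcase_abs in Hdd; lra.
Qed.


Ltac rew_derive := repeat match goal with |- context [Derive ?f ?t] =>
   erewrite (is_derive_unique f t) by eassumption end.
Ltac solve_ex := repeat split; try (eexists; eassumption).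

Lemma alg1 X Y VX VY S al be ga : 0 < S -> S^2 = X^2+Y^2 -> S = al*X+be*Y+ga ->
  ((VX^2+VY^2 - (X^2+Y^2)/S^3)*S - (X*VX+Y*VY)^2/S)/S^2 = al*(-X/S^3)+be*(-Y/S^3) ->
  (X*VY - Y*VX)^2 = ga.
Proof.
  intros HS HS2 HS1 H. rewrite <- HS2 in H.
  assert (H' : (VX^2+VY^2)*S^2 - S - (X*VX+Y*VY)^2 = -(al*X+be*Y)).
  { replace ((VX^2+VY^2)*S^2 - S - (X*VX+Y*VY)^2) with
      (((VX^2+VY^2 - S^2/S^3)*S - (X*VX+Y*VY)^2/S)/S^2 * S^3) by (field; lra).
    rewrite H. field; lra. }
  assert ((X*VY - Y*VX)^2 = (VX^2+VY^2)*S^2 - (X*VX+Y*VY)^2) by (rewrite HS2; ring).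
  lra.
Qed.

Lemma rad_sq a b : rad a b ^ 2 = a ^ 2 + b ^ 2.
Proof. unfold rad. rewrite pow2_sqrt; [ring|nra]. Qed.

Lemma rad_nonneg a b : 0 <= rad a b.
Proof. unfold rad; apply sqrt_pos. Qed.

Lemma GCL X Y VX VY a0 b0 al be ga : 0 < ga ->
 (forall t, a0 < t < b0 -> derivable_pt_lim X t (VX t) /\ derivable_pt_lim Y t (VY t) /\
    derivable_pt_lim VX t (- X t / rad (X t) (Y t) ^ 3) /\
    derivable_pt_lim VY t (- Y t / rad (X t) (Y t) ^ 3)) ->
 (forall t, a0 < t < b0 -> rad (X t) (Y t) = al * X t + be * Y t + ga) ->
 forall t, a0 < t < b0 ->
   X t * VX t + Y t * VY t = rad (X t) (Y t) * (al * VX t + be * VY t) /\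
   (X t * VY t - Y t * VX t) ^ 2 = ga.
Proof.
  intros Hga HD Hc.
  assert (Hpos : forall t, a0 < t < b0 -> 0 < X t ^ 2 + Y t ^ 2).
  { intros t Ht. destruct (Rle_or_lt (X t ^ 2 + Y t ^ 2) 0) as [Hle|]; auto.
    assert (X t = 0) by nra. assert (Y t = 0) by nra.
    specialize (Hc t Ht). rewrite H, H0 in Hc. unfold rad in Hc.
    replace (0 ^ 2 + 0 ^ 2) with 0 in Hc by ring. rewrite sqrt_0 in Hc. lra. }
  assert (Hrp : forall t, a0 < t < b0 -> 0 < rad (X t) (Y t)).
  { intros t Ht. unfold rad. apply sqrt_lt_R0. auto. }
  (* derivative of the radius *)
  assert (E1 : forall t, a0 < t < b0 ->
     (X t * VX t + Y t * VY t) / rad (X t) (Y t) = al * VX t + be * VY t).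
  { intros t Ht. destruct (HD t Ht) as (H1 & H2 & H3 & H4).
    apply is_derive_Reals in H1, H2.
    assert (D1 : derivable_pt_lim (fun u => rad (X u) (Y u)) t
                   ((X t * VX t + Y t * VY t) / rad (X t) (Y t))).
    { apply is_derive_Reals. unfold rad. auto_derive.
      - solve_ex. apply Hpos; auto.
      - rew_derive.
        replace (X t * (X t * 1) + Y t * (Y t * 1)) with (X t ^ 2 + Y t ^ 2) by ring.
        assert (0 < sqrt (X t ^ 2 + Y t ^ 2)) by (apply sqrt_lt_R0; auto).
        field; lra. }
    assert (D2 : derivable_pt_lim (fun u => rad (X u) (Y u)) t (al * VX t + be * VY t)).
    { apply (deriv_local (fun u => al * X u + be * Y u + ga) _ t _ a0 b0 Ht).
      - intros u Hu; apply Hc; auto.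
      - apply is_derive_Reals. auto_derive; [solve_ex|rew_derive; ring]. }
    exact (uniqueness_limite _ _ _ _ D1 D2). }
  intros t Ht. split.
  { specialize (E1 t Ht). specialize (Hrp t Ht).
    rewrite <- E1. field. lra. }
  destruct (HD t Ht) as (H1 & H2 & H3 & H4).
  apply is_derive_Reals in H1, H2, H3, H4.
  set (S := rad (X t) (Y t)) in *.
  assert (HS : 0 < S) by (apply Hrp; auto).
  assert (D1 : derivable_pt_lim (fun u => (X u * VX u + Y u * VY u) / rad (X u) (Y u)) t
     (((VX t^2+VY t^2 - (X t^2+Y t^2)/S^3)*S - (X t*VX t+Y t*VY t)^2/S)/S^2)).
  { apply is_derive_Reals. unfold rad. unfold S, rad in H3, H4 |- *. auto_derive.
    - solve_ex. apply Hpos; auto.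
    - solve_ex. all: try (apply Hpos; auto). replace (X t * (X t * 1) + Y t * (Y t * 1)) with (X t ^ 2 + Y t ^ 2) by ring. apply Rgt_not_eq, sqrt_lt_R0, Hpos; auto.
      replace (X t * (X t * 1) + Y t * (Y t * 1)) with (X t ^ 2 + Y t ^ 2) by ring.
      assert (0 < sqrt (X t ^ 2 + Y t ^ 2)) by (apply sqrt_lt_R0, Hpos; auto). rew_derive. field. lra. }
  assert (D2 : derivable_pt_lim (fun u => (X u * VX u + Y u * VY u) / rad (X u) (Y u)) t
     (al*(-X t/S^3)+be*(-Y t/S^3))).
  { apply (deriv_local (fun u => al * VX u + be * VY u) _ t _ a0 b0 Ht).
    - intros u Hu; apply E1; auto.
    - apply is_derive_Reals. auto_derive; [solve_ex|rew_derive; unfold S; ring]. }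
  apply (alg1 (X t) (Y t) (VX t) (VY t) S al be ga HS).
  - unfold S; apply rad_sq.
  - unfold S; apply Hc; auto.
  - exact (uniqueness_limite _ _ _ _ D1 D2).
Qed.


Lemma cont_on_plus a b f g : cont_on a b f -> cont_on a b g -> cont_on a b (fun t => f t + g t).
Proof.
  intros Hf Hg t Ht eps He.
  destruct (Hf t Ht (eps/2) ltac:(lra)) as [d1 [H1 K1]].
  destruct (Hg t Ht (eps/2) ltac:(lra)) as [d2 [H2 K2]].
  exists (Rmin d1 d2); split; [apply Rmin_pos; auto|].
  intros u Hu Hd. assert (A1 := Rmin_l d1 d2). assert (A2 := Rmin_r d1 d2).
  specialize (K1 u Hu ltac:(lra)). specialize (K2 u Hu ltac:(lra)).
  replace (f u + g u - (f t + g t)) with ((f u - f t) + (g u - g t)) by ring.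
  eapply Rle_lt_trans; [apply Rabs_triang|]. lra.
Qed.

Lemma cont_on_scal a b f k : cont_on a b f -> cont_on a b (fun t => k * f t).
Proof.
  intros Hf t Ht eps He.
  destruct (Hf t Ht (eps / (Rabs k + 1))) as [d [H1 K1]].
  { apply Rdiv_lt_0_compat; [lra|]. assert (0 <= Rabs k) by apply Rabs_pos. lra. }
  exists d; split; auto. intros u Hu Hd. specialize (K1 u Hu Hd).
  replace (k * f u - k * f t) with (k * (f u - f t)) by ring. rewrite Rabs_mult.
  assert (0 <= Rabs k) by apply Rabs_pos.
  assert (Rabs k * Rabs (f u - f t) <= Rabs k * (eps / (Rabs k + 1))).
  { apply Rmult_le_compat_l; lra. }
  assert (Rabs k * (eps / (Rabs k + 1)) < eps).
  { replace (Rabs k * (eps / (Rabs k + 1))) with (eps - eps / (Rabs k + 1)) by (field; lra).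
    assert (0 < eps / (Rabs k + 1)) by (apply Rdiv_lt_0_compat; lra). lra. }
  lra.
Qed.

Lemma cont_on_const a b k : cont_on a b (fun _ => k).
Proof. intros t Ht eps He. exists 1; split; [lra|]. intros. rewrite Rminus_diag, Rabs_R0; lra. Qed.

Lemma cont_on_id a b : cont_on a b (fun t => t).
Proof. intros t Ht eps He. exists eps; split; auto. Qed.

Lemma cont_on_comp a b c d f k : cont_on c d f -> cont_on a b k ->
  (forall s, a <= s <= b -> c <= k s <= d) -> cont_on a b (fun s => f (k s)).
Proof.
  intros Hf Hk Hr s Hs eps He.
  destruct (Hf (k s) (Hr s Hs) eps He) as [d1 [H1 K1]].
  destruct (Hk s Hs d1 H1) as [d2 [H2 K2]].
  exists d2; split; auto.
Qed.

Lemma cont_on_ext a b f g : cont_on a b f -> (forall t, a <= t <= b -> g t = f t) -> cont_on a b g.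
Proof.
  intros Hf E t Ht eps He. destruct (Hf t Ht eps He) as [d [H K]].
  exists d; split; auto. intros u Hu Hd. rewrite !E; auto.
Qed.

Lemma cont_pt_on a b f : (forall t, a <= t <= b -> continuity_pt f t) -> cont_on a b f.
Proof.
  intros H t Ht eps He. specialize (H t Ht).
  unfold continuity_pt, continue_in, limit1_in, limit_in in H; simpl in H; unfold R_dist in H.
  destruct (H eps He) as [d [Hd K]]. exists d; split; auto.
  intros u Hu Hdu. destruct (Req_dec u t) as [->|Hne].
  - rewrite Rminus_diag, Rabs_R0; lra.
  - apply K. split; auto. unfold D_x, no_cond. split; auto.
Qed.

Lemma inv_cont (sg h : R -> R) a b : a < b ->
  (forall t1 t2, a <= t1 -> t1 < t2 -> t2 <= b -> sg t1 < sg t2) ->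
  (forall s, a <= s <= b -> a <= h s <= b /\ sg (h s) = s) ->
  cont_on a b h.
Proof.
  intros Hab Hinc Hh s Hs eps He.
  destruct (Hh s Hs) as [Ht Hst]. set (t := h s) in *.
  assert (Up : exists d1, 0 < d1 /\ forall u, a <= u <= b -> u - s < d1 -> h u < t + eps).
  { destruct (Rle_dec (t + eps/2) b) as [Hl|Hl].
    - exists (sg (t + eps/2) - s). split.
      + rewrite <- Hst. assert (sg t < sg (t + eps/2)) by (apply Hinc; lra). lra.
      + intros u Hu Hd. destruct (Hh u Hu) as [Hu1 Hu2].
        destruct (Rlt_or_le (h u) (t + eps/2)) as [|Hge]; [lra|].
        destruct (Req_dec (h u) (t + eps / 2)) as [E|E].
        * rewrite <- E, Hu2 in Hd. lra.
        * assert (sg (t + eps/2) < sg (h u)) by (apply Hinc; lra). lra.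
    - exists 1; split; [lra|]. intros u Hu _. destruct (Hh u Hu). lra. }
  assert (Lo : exists d2, 0 < d2 /\ forall u, a <= u <= b -> s - u < d2 -> t - eps < h u).
  { destruct (Rle_dec a (t - eps/2)) as [Hl|Hl].
    - exists (s - sg (t - eps/2)). split.
      + rewrite <- Hst. assert (sg (t - eps/2) < sg t) by (apply Hinc; lra). lra.
      + intros u Hu Hd. destruct (Hh u Hu) as [Hu1 Hu2].
        destruct (Rlt_or_le (t - eps/2) (h u)) as [|Hge]; [lra|].
        destruct (Req_dec (h u) (t - eps / 2)) as [E|E].
        * rewrite E in Hu2. rewrite Hu2 in Hd. lra.
        * assert (sg (h u) < sg (t - eps/2)) by (apply Hinc; lra). lra.
    - exists 1; split; [lra|]. intros u Hu _. destruct (Hh u Hu). lra. }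
  destruct Up as [d1 [Hd1 U]]. destruct Lo as [d2 [Hd2 Lw]].
  exists (Rmin d1 d2). split; [apply Rmin_pos; auto|].
  intros u Hu Hd. assert (A1 := Rmin_l d1 d2). assert (A2 := Rmin_r d1 d2).
  assert (u - s < d1) by (unfold Rabs in Hd; destruct Rcase_abs in Hd; lra).
  assert (s - u < d2) by (unfold Rabs in Hd; destruct Rcase_abs in Hd; lra).
  specialize (U u Hu ltac:(lra)). specialize (Lw u Hu ltac:(lra)).
  unfold Rabs; destruct Rcase_abs; lra.
Qed.

Lemma conic_image phi M N x1 y1 x3 y3 : 0 < sin phi ->
  rad x1 y1 = M * y1 + N -> g_rel phi M N x1 y1 x3 y3 ->
  rad x3 y3 = rad x1 y1 + cos phi * x1 /\
  rad x3 y3 = cos phi * x3 + M * sin phi * y3 + N * sin phi ^ 2.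
Proof.
  intros Hs Hr [Gx Gy].
  assert (Hy3 : y3 = sin phi * y1) by (rewrite Gy; field; lra).
  assert (Hx3 : x3 = x1 + M * cos phi * y1 + N * cos phi).
  { rewrite Gx, Hy3. field. lra. }
  assert (Hpc := sin2_cos2 phi). unfold Rsqr in Hpc.
  set (r := rad x1 y1) in *.
  assert (Hr2 : r ^ 2 = x1 ^ 2 + y1 ^ 2) by apply rad_sq.
  assert (Hr0 : 0 <= r) by apply rad_nonneg.
  assert (Hxr : x1 ^ 2 <= r ^ 2) by nra.
  assert (Hcp : cos phi ^ 2 <= 1) by nra.
  assert (Hpos : 0 <= r + cos phi * x1).
  { destruct (Rle_or_lt 0 (r + cos phi * x1)); auto.
    assert ((cos phi * x1) ^ 2 <= r ^ 2).
    { replace ((cos phi * x1) ^ 2) with (cos phi ^ 2 * x1 ^ 2) by ring.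
      assert (0 <= x1 ^ 2) by nra. nra. }
    nra. }
  assert (E : rad x3 y3 = r + cos phi * x1).
  { unfold rad. rewrite <- (sqrt_pow2 (r + cos phi * x1)) by auto. f_equal.
    rewrite Hx3, Hy3.
    replace (M * cos phi * y1) with (cos phi * (M * y1)) by ring.
    replace (x1 + cos phi * (M * y1) + N * cos phi) with (x1 + cos phi * r) by (rewrite Hr; ring).
    assert (sin phi ^ 2 = 1 - cos phi ^ 2) by nra.
    replace ((sin phi * y1) ^ 2) with (sin phi ^ 2 * y1 ^ 2) by ring.
    rewrite H.
    replace ((x1 + cos phi * r) ^ 2 + (1 - cos phi ^ 2) * y1 ^ 2) with
      (x1 ^ 2 + 2 * cos phi * x1 * r + cos phi ^ 2 * (r ^ 2 - y1 ^ 2) + y1 ^ 2) by ring.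
    replace (r ^ 2 - y1 ^ 2) with (x1 ^ 2) by lra.
    replace ((r + cos phi * x1) ^ 2) with (r ^ 2 + 2 * cos phi * x1 * r + cos phi ^ 2 * x1 ^ 2) by ring.
    lra. }
  split; auto. rewrite E, Hx3, Hy3.
  assert (sin phi ^ 2 = 1 - cos phi ^ 2) by nra.
  replace (cos phi * (x1 + M * cos phi * y1 + N * cos phi) + M * sin phi * (sin phi * y1) +
     N * sin phi ^ 2) with (cos phi * x1 + (cos phi ^ 2 + sin phi ^ 2) * (M * y1 + N)) by ring.
  rewrite <- Hr. rewrite H. ring.
Qed.


Lemma cont_from_deriv a b f df : (forall t, a <= t <= b -> derivable_pt_lim f t (df t)) -> cont_on a b f.
Proof.
  intros H. apply cont_pt_on. intros t Ht.
  apply (derivable_continuous_pt f t (exist _ (df t) (H t Ht))).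
Qed.

Lemma chain F h s hd Fd v : derivable_pt_lim h s hd -> derivable_pt_lim F (h s) Fd ->
  v = Fd * hd -> derivable_pt_lim (fun u => F (h u)) s v.
Proof. intros H1 H2 ->. exact (derivable_pt_lim_comp h F s hd Fd H1 H2). Qed.

Lemma part_const (C : R -> R) tA tB : tA < tB ->
  (forall t, tA < t < tB -> derivable_pt_lim C t 0) ->
  forall t, tA < t < tB -> C t = C ((tA + tB) / 2).
Proof.
  intros Hab HD t Ht. set (tm := (tA + tB) / 2).
  assert (Hc : forall a b, tA < a -> b < tB -> cont_on a b C).
  { intros a b Ha Hb. apply (cont_from_deriv a b C (fun _ => 0)). intros; apply HD; lra. }
  destruct (Rtotal_order t tm) as [Hlt|[Heq|Hgt]].
  - symmetry. apply (const_on C t tm); auto. apply Hc; unfold tm in *; lra.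
    intros; apply HD; unfold tm in *; lra.
  - rewrite Heq; auto.
  - apply (const_on C tm t); auto. apply Hc; unfold tm in *; lra.
    intros; apply HD; unfold tm in *; lra.
Qed.


Theorem lemma10 (phi M N : R) (x y : R -> R) (tA tB : R) :
  0 < phi < PI -> 0 < N ->
  (* Gamma: a Keplerian arc carried by Sigma, from A=(x tA,y tA) to B=(x tB,y tB) *)
  tA < tB -> newton_sol x y tA tB ->
  (forall t, tA <= t <= tB -> on_sigma M N (x t) (y t)) ->
  y tA = y tB ->
  (exists x3 y3 sA sB, image_arc phi M N x y tA tB x3 y3 sA sB) /\
  (forall x3 y3 sA sB, image_arc phi M N x y tA tB x3 y3 sA sB ->
     sB - sA = tB - tA).
Proof.
  intros Hphi HN Hab Hns Hsig Hy. rename N into NN. rename M into MM.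
  unfold on_sigma in Hsig.
  destruct Hns as [Hcx [Hcy [vx [vy HD]]]].
  assert (Hsp : 0 < sin phi) by (apply sin_gt_0; lra).
  assert (Hpc : sin phi ^ 2 + cos phi ^ 2 = 1) by (rewrite <- (sin2_cos2 phi); unfold Rsqr; ring).
  set (cp := cos phi) in *. set (sp := sin phi) in *.
  assert (Hcp1 : cp ^ 2 < 1) by nra.
  assert (Hrpos : forall t, tA <= t <= tB -> 0 < rad (x t) (y t)).
  { intros t Ht. destruct (Rle_or_lt (rad (x t) (y t)) 0) as [Hle|]; auto.
    assert (E0 : rad (x t) (y t) = 0) by (assert (H := rad_nonneg (x t) (y t)); lra).
    assert (H2 := rad_sq (x t) (y t)). rewrite E0 in H2.
    assert (x t = 0) by nra. assert (y t = 0) by nra.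
    specialize (Hsig t Ht). rewrite E0, H0 in Hsig. lra. }
  assert (G1 : forall t, tA < t < tB ->
     x t * vx t + y t * vy t = rad (x t) (y t) * (0 * vx t + MM * vy t) /\
     (x t * vy t - y t * vx t) ^ 2 = NN).
  { apply (GCL x y vx vy tA tB 0 MM NN HN HD). intros t Ht. rewrite (Hsig t) by lra. ring. }
  set (Cf := fun t => x t * vy t - y t * vx t).
  assert (DC : forall t, tA < t < tB -> derivable_pt_lim Cf t 0).
  { intros t Ht. destruct (HD t Ht) as (H1 & H2 & H3 & H4).
    apply is_derive_Reals in H1, H2, H3, H4. apply is_derive_Reals. unfold Cf.
    auto_derive; [solve_ex| rew_derive]. unfold Rdiv; ring. }
  set (c := Cf ((tA + tB) / 2)).
  assert (HC : forall t, tA < t < tB -> Cf t = c) by (intros; apply part_const; auto).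
  assert (Hc2 : c ^ 2 = NN).
  { unfold c. destruct (G1 ((tA + tB) / 2)) as [_ E]; [lra|]. exact E. }
  assert (Hiii : forall t, tA < t < tB -> c * vy t * rad (x t) (y t) = x t).
  { intros t Ht. destruct (G1 t Ht) as [E1 E2]. rewrite <- (HC t Ht). unfold Cf.
    set (r := rad (x t) (y t)) in *.
    assert (Hr2 : r ^ 2 = x t ^ 2 + y t ^ 2) by apply rad_sq.
    assert (Hrs : r = MM * y t + NN) by (apply Hsig; lra).
    assert (A1 : r ^ 2 * vy t = (x t * vx t + y t * vy t) * y t + (x t * vy t - y t * vx t) * x t)
      by (rewrite Hr2; ring).
    rewrite E1 in A1.
    assert (A2 : (x t * vy t - y t * vx t) * x t = r * vy t * NN).
    { replace NN with (r - MM * y t) by lra.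
      replace (r * vy t * (r - MM * y t)) with (r ^ 2 * vy t - r * (0 * vx t + MM * vy t) * y t) by ring.
      rewrite A1. ring. }
    apply (Rmult_eq_reg_r NN); [|lra].
    replace ((x t * vy t - y t * vx t) * vy t * r * NN) with
      ((x t * vy t - y t * vx t) * (r * vy t * NN)) by ring.
    rewrite <- A2. replace ((x t * vy t - y t * vx t) * ((x t * vy t - y t * vx t) * x t))
      with ((x t * vy t - y t * vx t) ^ 2 * x t) by ring.
    rewrite E2. ring. }
  set (k0 := c * cp).
  set (sg := fun t => t + k0 * (y t - y tA)).
  set (L := fun t => 1 + k0 * vy t).
  assert (HL : forall t, tA < t < tB -> rad (x t) (y t) * L t = rad (x t) (y t) + cp * x t).
  { intros t Ht. unfold L, k0. rewrite <- (Hiii t Ht) at 3. ring. }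
  assert (HLpos : forall t, tA < t < tB -> 0 < L t).
  { intros t Ht. specialize (HL t Ht). assert (Hr := Hrpos t ltac:(lra)).
    assert (Hr2 := rad_sq (x t) (y t)). set (r := rad (x t) (y t)) in *.
    assert (0 < r + cp * x t).
    { assert ((cp * x t) ^ 2 < r ^ 2).
      { replace ((cp * x t) ^ 2) with (cp ^ 2 * x t ^ 2) by ring.
        destruct (Req_dec (x t) 0) as [E|E].
        - rewrite E. nra.
        - assert (0 < x t ^ 2) by (apply pow2_gt_0 ; auto) || nra. nra. }
      nra. }
    nra. }
  assert (Dsg : forall t, tA < t < tB -> derivable_pt_lim sg t (L t)).
  { intros t Ht. destruct (HD t Ht) as (H1 & H2 & H3 & H4).
    apply is_derive_Reals in H2. apply is_derive_Reals. unfold sg, L.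
    auto_derive; [solve_ex| rew_derive; ring]. }
  assert (Hsgc : cont_on tA tB sg).
  { unfold sg. apply cont_on_plus; [apply cont_on_id|]. apply cont_on_scal.
    apply (cont_on_ext _ _ (fun t => y t + (- y tA))); [|intros; ring].
    apply cont_on_plus; [auto|apply cont_on_const]. }
  assert (Hsginc : forall t1 t2, tA <= t1 -> t1 < t2 -> t2 <= tB -> sg t1 < sg t2).
  { intros t1 t2 H1 H2 H3.
    destruct (MVT_on sg L tA tB Hab Hsgc Dsg t1 t2 ltac:(lra) H3) as [xi [Hxi E]].
    assert (0 < L xi) by (apply HLpos; lra). nra. }
  assert (HsgA : sg tA = tA) by (unfold sg; ring).
  assert (HsgB : sg tB = tB) by (unfold sg; rewrite Hy; ring).
  assert (hex : forall s, exists t, tA <= s <= tB -> tA <= t <= tB /\ sg t = s).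
  { intros s. destruct (Rle_dec tA s) as [H1|H1]; [destruct (Rle_dec s tB) as [H2|H2]|].
    - assert (Hcf : continuity (fun u => sg (clamp tA tB u))).
      { intro u. apply cont_clamp; [lra|auto]. }
      destruct (IVT_gen (fun u => sg (clamp tA tB u)) tA tB s Hcf) as [t [Ht Et]].
      + rewrite !clamp_id by lra. rewrite HsgA, HsgB, Rmin_left, Rmax_right by lra. lra.
      + rewrite Rmin_left, Rmax_right in Ht by lra. exists t. intros _. split; auto.
        rewrite clamp_id in Et by lra. auto.
    - exists tA; intros; lra.
    - exists tA; intros; lra. }
  set (h := fun s => proj1_sig (constructive_indefinite_description _ (hex s))).
  assert (Hh : forall s, tA <= s <= tB -> tA <= h s <= tB /\ sg (h s) = s).
  { intros s Hs. unfold h. destruct (constructive_indefinite_description _ _) as [t Ht]. simpl. auto. }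
  clearbody h.
  assert (Hsgr : forall t, tA <= t <= tB -> tA <= sg t <= tB).
  { intros t Ht. split.
    - destruct (Req_dec t tA) as [->|E]; [lra|]. assert (sg tA < sg t) by (apply Hsginc; lra). lra.
    - destruct (Req_dec t tB) as [->|E]; [lra|]. assert (sg t < sg tB) by (apply Hsginc; lra). lra. }
  assert (Hsginj : forall t1 t2, tA <= t1 <= tB -> tA <= t2 <= tB -> sg t1 = sg t2 -> t1 = t2).
  { intros t1 t2 H1 H2 E. destruct (Rtotal_order t1 t2) as [Hl|[Hl|Hl]]; auto.
    - assert (sg t1 < sg t2) by (apply Hsginc; lra). lra.
    - assert (sg t2 < sg t1) by (apply Hsginc; lra). lra. }
  assert (Hhsg : forall t, tA <= t <= tB -> h (sg t) = t).
  { intros t Ht. destruct (Hh (sg t) (Hsgr t Ht)) as [H1 H2]. apply Hsginj; auto. }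
  assert (Hhinc : forall s1 s2, tA <= s1 -> s1 < s2 -> s2 <= tB -> h s1 < h s2).
  { intros s1 s2 H1 H2 H3. destruct (Hh s1 ltac:(lra)) as [A1 B1]. destruct (Hh s2 ltac:(lra)) as [A2 B2].
    destruct (Rlt_or_le (h s1) (h s2)) as [|Hle]; auto.
    destruct (Req_dec (h s1) (h s2)) as [E|E].
    - rewrite <- B1, <- B2 in H2. rewrite E in H2. lra.
    - assert (sg (h s2) < sg (h s1)) by (apply Hsginc; lra). lra. }
  assert (HhA : h tA = tA) by (rewrite <- HsgA at 1; apply Hhsg; lra).
  assert (HhB : h tB = tB) by (rewrite <- HsgB at 1; apply Hhsg; lra).
  assert (HhI : forall s, tA < s < tB -> tA < h s < tB).
  { intros s Hs. split; [rewrite <- HhA | rewrite <- HhB]; apply Hhinc; lra. }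
  assert (Hhc : cont_on tA tB h) by (apply (inv_cont sg h tA tB Hab Hsginc Hh)).
  assert (Dh : forall s, tA < s < tB -> derivable_pt_lim h s (1 / L (h s))).
  { intros s Hs. assert (HI := HhI s Hs).
    apply (ratio_deriv sg h (fun u => u) tA tB s (L (h s)) 1 Hs).
    - apply Dsg; auto.
    - assert (0 < L (h s)) by (apply HLpos; auto). lra.
    - intros eps He. destruct (Hhc s ltac:(lra) eps He) as [d [Hd K]].
      exists d; split; auto. intros u Hu Hdu. apply K; auto; lra.
    - intros u Hu Hne E. apply Hne.
      destruct (Hh u ltac:(lra)) as [_ E1]. destruct (Hh s ltac:(lra)) as [_ E2].
      rewrite <- E1, <- E2, E. auto.
    - intros u Hu. apply Hh; lra.
    - apply derivable_pt_lim_id. }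
  set (x3 := fun s => x (h s) + MM * cp * y (h s) + NN * cp).
  set (y3 := fun s => sp * y (h s)).
  set (vx3 := fun s => (vx (h s) + MM * cp * vy (h s)) / L (h s)).
  set (vy3 := fun s => sp * vy (h s) / L (h s)).
  assert (Hg : forall s, tA <= s <= tB -> g_rel phi MM NN (x (h s)) (y (h s)) (x3 s) (y3 s)).
  { intros s Hs. unfold g_rel, x3, y3. fold cp sp. split; field; lra. }
  assert (Hcon : forall s, tA <= s <= tB ->
     rad (x3 s) (y3 s) = rad (x (h s)) (y (h s)) + cp * x (h s) /\
     rad (x3 s) (y3 s) = cp * x3 s + MM * sp * y3 s + NN * sp ^ 2).
  { intros s Hs. destruct (Hh s Hs) as [Hr _].
    exact (conic_image phi MM NN _ _ _ _ Hsp (Hsig _ Hr) (Hg s Hs)). }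
  assert (HDQ : forall s, tA < s < tB ->
    derivable_pt_lim x3 s (vx3 s) /\ derivable_pt_lim y3 s (vy3 s) /\
    derivable_pt_lim vx3 s (- x3 s / rad (x3 s) (y3 s) ^ 3) /\
    derivable_pt_lim vy3 s (- y3 s / rad (x3 s) (y3 s) ^ 3)).
  { intros s Hs. assert (HI := HhI s Hs). set (t := h s) in *.
    destruct (HD t HI) as (H1 & H2 & H3 & H4).
    assert (HLt := HLpos t HI). assert (Hrt := Hrpos t ltac:(lra)).
    assert (Hr3 : rad (x3 s) (y3 s) = rad (x t) (y t) * L t).
    { rewrite (HL t HI). apply Hcon; lra. }
    assert (HCt := HC t HI). unfold Cf in HCt.
    apply is_derive_Reals in H1, H2, H3, H4.
    set (r := rad (x t) (y t)) in *.
    split; [|split; [|split]].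
    - apply (chain (fun t => x t + MM * cp * y t + NN * cp) h s (1 / L t) (vx t + MM * cp * vy t)).
      + apply Dh; auto.
      + apply is_derive_Reals. auto_derive; [solve_ex| rew_derive; ring].
      + unfold vx3. fold t. field. lra.
    - apply (chain (fun t => sp * y t) h s (1 / L t) (sp * vy t)).
      + apply Dh; auto.
      + apply is_derive_Reals. auto_derive; [solve_ex| rew_derive; ring].
      + unfold vy3. fold t. field. lra.
    - apply (chain (fun t => (vx t + MM * cp * vy t) / (1 + k0 * vy t)) h s (1 / L t)
         (((- x t / r ^ 3 - MM * cp * (y t / r ^ 3)) * L t
            - (vx t + MM * cp * vy t) * (k0 * (- y t / r ^ 3))) / (L t) ^ 2)).
      + apply Dh; auto.
      + apply is_derive_Reals. unfold L in HLt |- *. auto_derive.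
        * solve_ex. unfold t in *. lra.
        * rew_derive. unfold t in *. field. split; lra.
      + rewrite Hr3. unfold x3. fold t.
        assert (Hnum : - (x t + MM * cp * y t) * L t + (vx t + MM * cp * vy t) * k0 * y t
                       = - (x t + MM * cp * y t + NN * cp)).
        { unfold L, k0. replace NN with (c ^ 2) by auto. rewrite <- HCt. ring. }
        replace (- (x t + MM * cp * y t + NN * cp)) with
          (- (x t + MM * cp * y t) * L t + (vx t + MM * cp * vy t) * k0 * y t) by (rewrite Hnum; auto).
        field. split; lra.
    - apply (chain (fun t => sp * vy t / (1 + k0 * vy t)) h s (1 / L t)
         ((sp * (- y t / r ^ 3) * L t - sp * vy t * (k0 * (- y t / r ^ 3))) / (L t) ^ 2)).
      + apply Dh; auto.
      + apply is_derive_Reals. unfold L in HLt |- *. auto_derive.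
        * solve_ex. unfold t in *. lra.
        * rew_derive. unfold t in *. field. split; lra.
      + rewrite Hr3. unfold y3. fold t. unfold L in HLt |- *. field. split; lra. }
  assert (Hx3c : cont_on tA tB x3).
  { unfold x3. apply cont_on_plus; [apply cont_on_plus|apply cont_on_const].
    - apply (cont_on_comp tA tB tA tB x h Hcx Hhc). intros; apply Hh; auto.
    - apply cont_on_scal. apply (cont_on_comp tA tB tA tB y h Hcy Hhc). intros; apply Hh; auto. }
  assert (Hy3c : cont_on tA tB y3).
  { unfold y3. apply cont_on_scal. apply (cont_on_comp tA tB tA tB y h Hcy Hhc). intros; apply Hh; auto. }
  assert (HQconic : forall u, tA < u < tB ->
     rad (x3 u) (y3 u) = cp * x3 u + (MM * sp) * y3 u + NN * sp ^ 2).
  { intros u Hu. rewrite (proj2 (Hcon u ltac:(lra))). ring. }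
  assert (HNs : 0 < NN * sp ^ 2) by (apply Rmult_lt_0_compat; [lra| apply pow_lt; lra]).
  assert (GQ := GCL x3 y3 vx3 vy3 tA tB cp (MM * sp) (NN * sp ^ 2) HNs HDQ HQconic).
  split.
  { exists x3, y3, tA, tB. split; [auto|split].
    - split; [auto|split; [auto|]]. exists vx3, vy3. exact HDQ.
    - exists h. split; [auto|split; [auto|split; [auto|split]]].
      + intros; apply Hhinc; auto.
      + intros s Hs. apply Hg; auto. }
  intros X Y sA sB [Hs' [Hns' [h' [h1 [h2 [hc [hinc hg]]]]]]].
  destruct Hns' as [HcX [HcY [VX [VY HDP]]]].
  assert (Hh'r : forall s, sA <= s <= sB -> tA <= h' s <= tB).
  { intros s Hs. split.
    - destruct (Req_dec s sA) as [->|E]; [lra|]. assert (h' sA < h' s) by (apply hinc; lra). lra.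
    - destruct (Req_dec s sB) as [->|E]; [lra|]. assert (h' s < h' sB) by (apply hinc; lra). lra. }
  assert (Hh'I : forall s, sA < s < sB -> tA < h' s < tB).
  { intros s Hs. split; [rewrite <- h1| rewrite <- h2]; apply hinc; lra. }
  set (k := fun s => sg (h' s)).
  assert (HPQ : forall s, sA <= s <= sB -> X s = x3 (k s) /\ Y s = y3 (k s)).
  { intros s Hs. destruct (hg s Hs) as [Gx Gy]. unfold k, x3, y3.
    rewrite Hhsg by (apply Hh'r; auto). fold cp sp in Gx, Gy |- *.
    split.
    - rewrite Gx, Gy. field. lra.
    - rewrite Gy. field. lra. }
  assert (HPconic : forall s, sA < s < sB ->
     rad (X s) (Y s) = cp * X s + (MM * sp) * Y s + NN * sp ^ 2).
  { intros s Hs. assert (Hr := Hh'r s ltac:(lra)).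
    destruct (conic_image phi MM NN _ _ _ _ Hsp (Hsig _ Hr) (hg s ltac:(lra))) as [_ E].
    rewrite E. fold cp sp. ring. }
  assert (GP := GCL X Y VX VY sA sB cp (MM * sp) (NN * sp ^ 2) HNs HDP HPconic).
  assert (Hkc : cont_on sA sB k).
  { unfold k. apply (cont_on_comp sA sB tA tB sg h' Hsgc hc Hh'r). }
  assert (Hkinc : forall s1 s2, sA <= s1 -> s1 < s2 -> s2 <= sB -> k s1 < k s2).
  { intros s1 s2 H1 H2 H3. unfold k. apply Hsginc.
    - apply Hh'r; lra.
    - apply hinc; auto.
    - apply Hh'r; lra. }
  assert (HkA : k sA = tA) by (unfold k; rewrite h1; auto).
  assert (HkB : k sB = tB) by (unfold k; rewrite h2; auto).
  assert (HkI : forall s, sA < s < sB -> tA < k s < tB).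
  { intros s Hs. split; [rewrite <- HkA| rewrite <- HkB]; apply Hkinc; lra. }
  assert (Dk : forall s0, sA < s0 < sB -> derivable_pt_lim k s0 1).
  { intros s0 Hs0. assert (HI := HkI s0 Hs0). set (u0 := k s0) in *.
    set (W1 := vx3 u0). set (W2 := vy3 u0).
    destruct (GQ u0 HI) as [_ CQ].
    destruct (GP s0 Hs0) as [_ CP].
    assert (HL0 : W1 ^ 2 + W2 ^ 2 <> 0).
    { intro E. assert (W1 = 0) by nra. assert (W2 = 0) by nra.
      fold W1 W2 in CQ. rewrite H, H0 in CQ. nra. }
    destruct (HDQ u0 HI) as (Q1 & Q2 & _ & _).
    destruct (HDP s0 Hs0) as (P1 & P2 & _ & _).
    assert (Df : derivable_pt_lim (fun u => x3 u * W1 + y3 u * W2) u0 (W1 ^ 2 + W2 ^ 2)).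
    { apply is_derive_Reals in Q1, Q2. apply is_derive_Reals. auto_derive; [solve_ex|rew_derive].
      fold W1 W2. ring. }
    assert (DF : derivable_pt_lim (fun s => X s * W1 + Y s * W2) s0 (VX s0 * W1 + VY s0 * W2)).
    { apply is_derive_Reals in P1, P2. apply is_derive_Reals. auto_derive; [solve_ex|rew_derive; ring]. }
    assert (Dk0 := ratio_deriv (fun u => x3 u * W1 + y3 u * W2) k (fun s => X s * W1 + Y s * W2)
       sA sB s0 (W1 ^ 2 + W2 ^ 2) (VX s0 * W1 + VY s0 * W2) Hs0 Df HL0).
    set (kd := (VX s0 * W1 + VY s0 * W2) / (W1 ^ 2 + W2 ^ 2)) in Dk0.
    assert (Dk1 : derivable_pt_lim k s0 kd).
    { apply Dk0.
      - intros eps He. destruct (Hkc s0 ltac:(lra) eps He) as [d [Hd K]].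
        exists d; split; auto. intros u Hu Hdu. apply K; auto; lra.
      - intros u Hu Hne E. apply Hne.
        destruct (Rtotal_order u s0) as [Hl|[Hl|Hl]]; auto.
        + assert (Hq : k u < k s0) by (apply Hkinc; lra). unfold u0 in *. lra.
        + assert (Hq : k s0 < k u) by (apply Hkinc; lra). unfold u0 in *. lra.
      - intros u Hu. destruct (HPQ u ltac:(lra)) as [E1 E2]. rewrite E1, E2. auto.
      - exact DF. }
    assert (EX : VX s0 = W1 * kd).
    { apply (uniqueness_limite X s0); auto.
      apply (deriv_local (fun s => x3 (k s)) X s0 _ sA sB Hs0).
      - intros u Hu; apply HPQ; lra.
      - apply (chain x3 k s0 kd W1); auto; ring. }
    assert (EY : VY s0 = W2 * kd).
    { apply (uniqueness_limite Y s0); auto.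
      apply (deriv_local (fun s => y3 (k s)) Y s0 _ sA sB Hs0).
      - intros u Hu; apply HPQ; lra.
      - apply (chain y3 k s0 kd W2); auto; ring. }
    destruct (HPQ s0 ltac:(lra)) as [E1 E2]. fold u0 in E1, E2.
    rewrite EX, EY, E1, E2 in CP. fold W1 W2 in CQ.
    assert (Hkd2 : kd ^ 2 = 1).
    { replace ((x3 u0 * (W2 * kd) - y3 u0 * (W1 * kd)) ^ 2) with
        (kd ^ 2 * (x3 u0 * W2 - y3 u0 * W1) ^ 2) in CP by ring.
      rewrite CQ in CP. apply (Rmult_eq_reg_r (NN * sp ^ 2)); [|lra]. lra. }
    assert (0 <= kd).
    { apply (inc_deriv_nonneg k sA sB s0 kd Hs0); auto. intros; apply Hkinc; lra. }
    replace 1 with kd by nra. auto. }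
  assert (Hfin := const_on (fun s => k s - s) sA sB Hs').
  simpl in Hfin. rewrite HkA, HkB in Hfin.
  assert (tB - sB = tA - sA); [|lra].
  apply Hfin.
  - apply (cont_on_ext _ _ (fun s => k s + (-1) * s)); [|intros; ring].
    apply cont_on_plus; [auto|apply cont_on_scal, cont_on_id].
  - intros s Hs. specialize (Dk s Hs). apply is_derive_Reals in Dk. apply is_derive_Reals.
    auto_derive; [solve_ex|rew_derive; ring].
Qed.
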